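(* Let $k\ge3$, $r\ge0$ and $n=3^k-1+2r$. Let $M$ be the closed surface carrying the polyhedral map $D_{\{2k,2k\}}(n)$. Then $M$ is orientable if $r$ is even and non-orientable if $r$ is odd.
   Context: Vertex set $\mathbb{Z}_n$; integers are read modulo $n$. Define $w_0=0$. Then successively subtract $3^{k-1}+r$ twice, then $3^{k-2}$ twice, $3^{k-3}$ twice, ..., and finally $3$ twice. This gives vertices $w_1,\dots,w_{2k-2}$, and one checks $w_{2k-2}\equiv 2\pmod n$. Let $P$ be the $2k$-gon with cyclically ordered boundary vertices $(0,w_1,\dots,w_{2k-3},2,1)$. The map $D_{\{2k,2k\}}(n)$ is the 2-dimensional cell complex whose 2-cells are the $n$ translates $P+i$, $i\in\mathbb{Z}_n$. It is a known standing fact (Datta) that this is a $\{2k,2k\}$-equivelar polyhedral map on a closed surface $M$: every 2-cell is a $2k$-gon, every vertex has degree $2k$, and any two 2-cells meet in the empty set, a common vertex, or a common edge. *)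

(* Defs.v *)
From mathcomp Require Import all_boot.
Set Implicit Arguments. Unset Strict Implicit. Unset Printing Implicit Defensive.

(* Vertices of D_{2k,2k}(n) are Z_n, represented by naturals 0 <= x < n. *)

Definition Dn (k r : nat) : nat := 3 ^ k - 1 + 2 * r.

Definition Dsteps (k r : nat) : seq nat :=
  (3 ^ k.-1 + r) :: (3 ^ k.-1 + r) ::
  flatten [seq [:: 3 ^ (k - j); 3 ^ (k - j)] | j <- iota 2 (k - 2)].

Definition Dw (k r j : nat) : nat :=
  let n := Dn k r in (n - (sumn (take j (Dsteps k r))) %% n) %% n.

Definition Dbase (k r : nat) : seq nat :=
  [:: 0] ++ [seq Dw k r j | j <- iota 1 (2 * k - 3)] ++ [:: 2 %% Dn k r; 1 %% Dn k r].

Definition Dface (k r i : nat) : seq nat :=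
  [seq (x + i) %% Dn k r | x <- Dbase k r].

Definition dedges (s : seq nat) : seq (nat * nat) := zip s (rot 1 s).

Definition oface (s : seq nat) (b : bool) : seq nat := if b then s else rev s.

(* Combinatorial orientability of a polyhedral map on a closed surface given by
   its list of faces: there is a choice of orientation of each face such that
   two distinct faces never traverse a common edge in the same direction
   (i.e. every edge is traversed in opposite directions by its two faces). *)
Definition orientable_faces (faces : seq (seq nat)) : Prop :=
  exists e : nat -> bool,
    forall i j, i < size faces -> j < size faces -> i != j ->
      ~~ has (fun d => d \in dedges (oface (nth [::] faces j) (e j)))
             (dedges (oface (nth [::] faces i) (e i))).

Definition Dfaces (k r : nat) : seq (seq nat) :=
  [seq Dface k r i | i <- iota 0 (Dn k r)].

Definition D_orientable (k r : nat) : Prop := orientable_faces (Dfaces k r).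

(* Main.v *)
Require Import Defs.
From mathcomp Require Import all_boot.
From Stdlib Require Import Lia.

Ltac slia := rewrite -?muln2 -?subn1; repeat match goal with
 | H : context [ double ?x ] |- _ => rewrite -(muln2 x) in H
 | H : context [ predn ?x ] |- _ => rewrite -(subn1 x) in H end;
 repeat match goal with
 | H : is_true (leq _ _) |- _ => move/leP: H => H
 | H : ~~ (is_true (leq _ _)) |- _ => move/leP: H => H
 end; try (apply/leP);
 repeat match goal with |- context [addn ?a ?b] => change (addn a b) with (Nat.add a b)
 | |- context [subn ?a ?b] => change (subn a b) with (Nat.sub a b)
 | |- context [muln ?a ?b] => change (muln a b) with (Nat.mul a b)
 | H: context [addn ?a ?b] |- _ => change (addn a b) with (Nat.add a b) in H
 | H: context [subn ?a ?b] |- _ => change (subn a b) with (Nat.sub a b) in H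
 | H: context [muln ?a ?b] |- _ => change (muln a b) with (Nat.mul a b) in H
 end; lia.
Lemma nth_rot1 (s : seq nat) m : m < size s ->
  nth 0 (rot 1 s) m = nth 0 s (m.+1 %% size s).
Proof.
case: s => [//|x t] /= Hm.
rewrite rot1_cons nth_rcons.
case: (ltnP m (size t)) => H.
  by rewrite modn_small //.
have -> : m = size t by slia.
by rewrite eqxx modnn.
Qed.

Lemma mem_dedges (s : seq nat) x y :
  reflect (exists2 m, m < size s & (nth 0 s m = x /\ nth 0 s (m.+1 %% size s) = y))
          ((x, y) \in dedges s).
Proof.
rewrite /dedges.
apply: (iffP (nthP (0, 0))); rewrite size_zip size_rot minnn.
  move=> [m Hm]; rewrite nth_zip ?size_rot // nth_rot1 // => [[<- <-]].
  by exists m.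
move=> [m Hm [Hx Hy]]; exists m => //.
by rewrite nth_zip ?size_rot // nth_rot1 // Hx Hy.
Qed.

Lemma dedges_rev (s : seq nat) x y :
  (x, y) \in dedges s -> (y, x) \in dedges (rev s).
Proof.
move/mem_dedges => [m Hm [Hx Hy]]; apply/mem_dedges.
rewrite size_rev.
case: (ltnP m.+1 (size s)) => H.
  exists (size s - m.+2); first by slia.
  have E1 : (size s - m.+2).+1 %% size s = size s - m.+1 by rewrite modn_small; slia.
  rewrite E1 !nth_rev; try slia.
  rewrite -Hy -Hx modn_small //.
  have -> : size s - (size s - m.+2).+1 = m.+1 by slia.
  have -> : size s - (size s - m.+1).+1 = m by slia.
  by [].
have HmL : m.+1 = size s by slia.
exists (size s).-1; first by slia.
have -> : ((size s).-1).+1 %% size s = 0 by rewrite prednK ?modnn; slia.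
rewrite !nth_rev; try slia.
rewrite -Hy -Hx HmL modnn.
have -> : size s - ((size s).-1).+1 = 0 by slia.
have -> : size s - 1 = m by slia.
by [].
Qed.

Definition av k r := 3 ^ k.-1 + r.
Definition gv k r q := if q == 0 then av k r else 3 ^ (k.-1 - q).
Definition Sq k r := Dsteps k r ++ [:: 1; 1].
Definition Tq k r m := sumn (take m (Sq k r)).

Lemma size_flat2 (f : nat -> nat) l :
  size (flatten [seq [:: f j; f j] | j <- l]) = (size l).*2.
Proof. by elim: l => //= x l IH; rewrite IH. Qed.

Lemma nth_flat2 (f : nat -> nat) l q (b : bool) :
  nth 0 (flatten [seq [:: f j; f j] | j <- l]) (b + q.*2) = nth 0 (map f l) q.
Proof.
elim: l q => [|x l IH] q /=; first by rewrite !nth_nil.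
case: q => [|q]; first by clear IH; case: b.
rewrite doubleS addnS addnS /=. exact: IH.
Qed.

Lemma size_Dsteps k r : 2 <= k -> size (Dsteps k r) = k.*2 - 2.
Proof.
move=> hk; rewrite /Dsteps /= size_flat2 size_iota. slia.
Qed.

Lemma size_Sq k r : 2 <= k -> size (Sq k r) = k.*2.
Proof. move=> hk; rewrite /Sq size_cat size_Dsteps //=. slia. Qed.

Lemma nth_Sq k r q (b : bool) : 3 <= k -> q < k ->
  nth 0 (Sq k r) (b + q.*2) = gv k r q.
Proof.
move=> hk hq; rewrite /Sq nth_cat size_Dsteps ?(ltnW hk) // /gv.
case: q hq => [|q] hq.
  have h : b + 0.*2 < k.*2 - 2 by case: b => /=; slia.
  rewrite h; clear h.
  by case: b.
case: (ltnP q.+1 k.-1) => hq2.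
  have h : b + q.+1.*2 < k.*2 - 2 by case: b => /=; slia.
  rewrite h.
  rewrite /Dsteps doubleS addnS addnS /= nth_flat2.
  rewrite (nth_map 0); last by rewrite size_iota; slia.
  rewrite nth_iota; last by slia.
  congr (3 ^ _). rewrite -subn1. slia.
have hq3 : q.+1 = k.-1 by rewrite -subn1 in hq2 *; slia.
have h : k.*2 - 2 <= b + q.+1.*2 by rewrite hq3; case: b => /=; slia.
rewrite ltnNge h /=; clear h.
have -> : b + q.+1.*2 - (k.*2 - 2) = b by rewrite hq3; case: b => /=; slia.
rewrite -hq3 subnn. by case: b.
Qed.

Lemma nth_Sq' k r m : 3 <= k -> m < k.*2 -> nth 0 (Sq k r) m = gv k r m./2.
Proof.
move=> hk hm; rewrite -{1}(odd_double_half m) nth_Sq //.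
rewrite -(odd_double_half m) in hm. case: (odd m) hm => /= hm; slia.
Qed.

Lemma Tq_succ k r m : m < size (Sq k r) ->
  Tq k r m.+1 = Tq k r m + nth 0 (Sq k r) m.
Proof. by move=> hm; rewrite /Tq (take_nth 0 hm) sumn_rcons. Qed.

Lemma gv_pos k r q : 0 < gv k r q.
Proof. rewrite /gv; case: eqP => _; last by rewrite expn_gt0. rewrite /av addn_gt0 expn_gt0 //. Qed.

Lemma gv_le k r q : 2 <= k -> gv k r q <= av k r.
Proof.
move=> hk; rewrite /gv; case: eqP => // /eqP hq.
rewrite /av; apply: leq_trans (leq_addr _ _); apply: leq_pexp2l => //; slia.
Qed.

Lemma gv_odd k r q : ~~ odd r -> odd (gv k r q).
Proof.
move=> hr; rewrite /gv; case: eqP => _; last by rewrite oddX orbT.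
by rewrite /av oddD oddX orbT (negbTE hr).
Qed.

Lemma gv_inj k r q1 q2 : 2 <= k -> q1 < k -> q2 < k -> gv k r q1 = gv k r q2 -> q1 = q2.
Proof.
move=> hk h1 h2.
have key : forall q, q < k -> 0 < q -> gv k r q < av k r.
  move=> q hq hq0; rewrite /gv; case: eqP => [E|_]; first by rewrite E in hq0.
  rewrite /av; apply: leq_trans (leq_addr _ _); rewrite ltn_exp2l //; slia.
case: (posnP q1) => [->|p1]; case: (posnP q2) => [->|p2] //.
- move=> E; move: (key q2 h2 p2); rewrite -E /gv eqxx ltnn //.
- move=> E; move: (key q1 h1 p1); rewrite E /gv eqxx ltnn //.
rewrite /gv (gtn_eqF p1) (gtn_eqF p2) => /eqP; rewrite eqn_exp2l // => /eqP.
rewrite -subn1; slia.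
Qed.

Lemma pow_facts k : 3 <= k -> 3 ^ k = 3 * 3 ^ k.-1 /\ 9 <= 3 ^ k.-1.
Proof.
move=> hk; split; first by rewrite -expnS prednK //; slia.
have -> : 9 = 3 ^ 2 by [].
apply: leq_pexp2l => //; slia.
Qed.

Lemma Tq0 k r : Tq k r 0 = 0.
Proof. by rewrite /Tq take0. Qed.

Lemma Tq_odd k r m : ~~ odd r -> 3 <= k -> m <= k.*2 -> odd (Tq k r m) = odd m.
Proof.
move=> hr hk; elim: m => [|m IH] hm; first by rewrite Tq0.
rewrite Tq_succ ?size_Sq ?(ltnW hk) // oddD IH ?(ltnW hm) // nth_Sq' //.
by rewrite gv_odd //= addbT.
Qed.

Lemma Tq_pair k r p : 3 <= k -> 0 < p -> p <= k ->
  Tq k r p.*2 + 3 ^ (k - p) = (av k r).*2 + 3 ^ k.-1.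
Proof.
move=> hk; have hs := size_Sq k r (ltnW hk).
elim: p => [//|p IH] _ hp.
have E2 : p.+1.*2 = (p.*2).+2 by rewrite doubleS.
rewrite E2 Tq_succ ?hs; last by slia.
rewrite Tq_succ ?hs; last by slia.
have h0 : nth 0 (Sq k r) p.*2 = gv k r p by rewrite (nth_Sq k r _ false) //; slia.
have h1 : nth 0 (Sq k r) p.*2.+1 = gv k r p by rewrite (nth_Sq k r _ true) //; slia.
rewrite h0 h1.
case: (posnP p) => [->|pp].
  rewrite Tq0 /gv /=. rewrite -subn1. slia.
move: (IH pp (ltnW hp)).
rewrite /gv (gtn_eqF pp).
have E3 : 3 ^ (k - p) = 3 * 3 ^ (k.-1 - p) by rewrite -expnS; congr (3 ^ _); slia.
have E4 : k - p.+1 = k.-1 - p by slia.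
rewrite E3 E4. slia.
Qed.

Lemma Tq_end k r : 3 <= k ->
  Tq k r (k.*2 - 2) = Dn k r - 2 /\ Tq k r k.*2 = Dn k r.
Proof.
move=> hk; have [P1 P2] := pow_facts _ hk.
have hs := size_Sq k r (ltnW hk).
have A' := Tq_pair k r k.-1 hk ltac:(slia) ltac:(slia).
have B' := Tq_pair k r k hk ltac:(slia) ltac:(slia).
have E : k.-1.*2 = k.*2 - 2 by slia.
have E2 : k - k.-1 = 1 by slia.
rewrite E E2 in A'. rewrite subnn in B'.
rewrite /Dn P1; move: A' B'; rewrite /av expn1 expn0. slia.
Qed.

Lemma Dn_big k r : 3 <= k -> 2 * av k r < Dn k r.
Proof. move=> hk; have [P1 P2] := pow_facts _ hk; rewrite /Dn /av P1; slia. Qed.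

Lemma mod_neg_cancel n X : 0 < n -> (n - X %% n) %% n + X = 0 %[mod n].
Proof.
move=> hn; rewrite modnDml -modnDmr subnK ?modnn ?mod0n //.
exact: ltnW (ltn_pmod _ hn).
Qed.

Lemma size_Dbase k r : 3 <= k -> size (Dbase k r) = k.*2.
Proof. move=> hk; rewrite /Dbase /= size_cat size_map size_iota /=; slia. Qed.

Lemma base_mod k r m : 3 <= k -> m < k.*2 ->
  nth 0 (Dbase k r) m + Tq k r m = 0 %[mod Dn k r].
Proof.
move=> hk hm; have [P1 P2] := pow_facts _ hk.
have [T1 T2] := Tq_end k r hk.
have hn : 2 < Dn k r by rewrite /Dn P1; slia.
have hs := size_Sq k r (ltnW hk).
have hd := size_Dsteps k r (ltnW hk).
case: m hm => [|p] hm; first by rewrite Tq0.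
rewrite /Dbase /= nth_cat size_map size_iota mul2n.
case: (ltnP p (k.*2 - 3)) => hp.
  rewrite (nth_map 0) ?size_iota // nth_iota // add1n /Dw.
  rewrite /Tq /Sq take_cat hd.
  have -> : p.+1 < k.*2 - 2 by slia.
  apply: mod_neg_cancel; slia.
case: (ltnP p (k.*2 - 2)) => hp2.
  have -> : p - (k.*2 - 3) = 0 by slia.
  have -> : p.+1 = k.*2 - 2 by slia.
  rewrite T1 /= modnDml subnKC ?modnn ?mod0n //; slia.
have -> : p - (k.*2 - 3) = 1 by slia.
have -> : p.+1 = (k.*2 - 2).+1 by slia.
rewrite Tq_succ ?hs; last by slia.
rewrite T1 (nth_Sq' k r _ hk); last by slia.
have -> : (k.*2 - 2)./2 = k.-1.
  have -> : k.*2 - 2 = (k.-1).*2 by slia.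
  by rewrite doubleK.
rewrite /gv.
have -> : (k.-1 == 0) = false by apply/negbTE; rewrite -lt0n; slia.
rewrite subnn expn0 /= modnDml.
have -> : 1 + (Dn k r - 2 + 1) = Dn k r by slia.
by rewrite modnn mod0n.
Qed.

Lemma size_Dface k r i : 3 <= k -> size (Dface k r i) = k.*2.
Proof. by move=> hk; rewrite /Dface size_map size_Dbase. Qed.

Lemma nth_Dface k r i m : 3 <= k -> m < k.*2 ->
  nth 0 (Dface k r i) m = (nth 0 (Dbase k r) m + i) %% Dn k r.
Proof. by move=> hk hm; rewrite /Dface (nth_map 0) // size_Dbase. Qed.

Lemma Dn_pos k r : 3 <= k -> 0 < Dn k r.
Proof. move=> hk; have H := Dn_big k r hk; slia. Qed.

Lemma face_edge k r i u v : 3 <= k -> (u, v) \in dedges (Dface k r i) ->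
  exists2 m, m < k.*2 &
    ((u + Tq k r m) %% Dn k r = i %% Dn k r /\
     (v + nth 0 (Sq k r) m) %% Dn k r = u %% Dn k r).
Proof.
move=> hk /mem_dedges [m hm [hu hv]]; rewrite size_Dface // in hm hv.
exists m => //.
have hn := Dn_pos k r hk.
rewrite nth_Dface // in hu.
rewrite (nth_Dface _ _ _ _ hk) in hv; last by rewrite ltn_mod; slia.
have Hu : (u + Tq k r m) %% Dn k r = i %% Dn k r.
  by rewrite -hu modnDml addnAC -(modnDml (nth 0 (Dbase k r) m + _)) base_mod // mod0n add0n.
split => //.
have Hv : (v + Tq k r m.+1) %% Dn k r = i %% Dn k r.
  rewrite -hv modnDml addnAC -(modnDml (nth 0 (Dbase k r) _ + _)).
  case: (ltnP m.+1 k.*2) => h.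
    by rewrite (modn_small h) base_mod // mod0n add0n.
  have -> : m.+1 = k.*2 by slia.
  rewrite modnn (Tq_end k r hk).2 /= add0n modnn add0n //.
apply/eqP; rewrite -(eqn_modDr (Tq k r m)); apply/eqP.
rewrite Hu -addnA (addnC (nth _ _ _)) -Tq_succ ?size_Sq ?(ltnW hk) //.
Qed.

Lemma oface_edge k r i (b : bool) u v : 3 <= k ->
  (u, v) \in dedges (oface (Dface k r i) b) ->
  exists2 m, m < k.*2 &
    if b then (u + Tq k r m) %% Dn k r = i %% Dn k r /\
              (v + nth 0 (Sq k r) m) %% Dn k r = u %% Dn k r
    else (v + Tq k r m) %% Dn k r = i %% Dn k r /\
         (u + nth 0 (Sq k r) m) %% Dn k r = v %% Dn k r.
Proof.
move=> hk; case: b => /= H; first exact: face_edge.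
have := dedges_rev _ _ _ H; rewrite revK => H'; exact: face_edge H'.
Qed.

Lemma Sq_bounds k r m : 3 <= k -> m < k.*2 ->
  0 < nth 0 (Sq k r) m /\ 2 * nth 0 (Sq k r) m < Dn k r.
Proof.
move=> hk hm; rewrite nth_Sq' //; split; first exact: gv_pos.
have H1 := gv_le k r (m./2) (ltnW hk); have H2 := Dn_big k r hk. slia.
Qed.

Lemma opp_contra k r m1 m2 x y : 3 <= k -> m1 < k.*2 -> m2 < k.*2 ->
  (x + nth 0 (Sq k r) m1) %% Dn k r = y %% Dn k r ->
  (y + nth 0 (Sq k r) m2) %% Dn k r = x %% Dn k r -> False.
Proof.
move=> hk h1 h2 H1 H2.
have [a1 b1] := Sq_bounds k r _ hk h1; have [a2 b2] := Sq_bounds k r _ hk h2.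
have : (x + (nth 0 (Sq k r) m1 + nth 0 (Sq k r) m2)) %% Dn k r = (x + 0) %% Dn k r.
  by rewrite addnA -modnDml H1 modnDml H2 addn0.
move/eqP; rewrite eqn_modDl mod0n modn_small; last by slia.
move/eqP; slia.
Qed.

Lemma odd_cong n a b : ~~ odd n -> a %% n = b %% n -> odd a = odd b.
Proof.
move=> hn H; have := congr1 (modn^~ 2) H; rewrite /= !modn_dvdm ?dvdn2 // !modn2.
by case: (odd a); case: (odd b).
Qed.

Lemma Dn_even k r : 3 <= k -> ~~ odd (Dn k r).
Proof.
move=> hk; rewrite /Dn oddD oddB ?expn_gt0 // oddX /= mul2n odd_double.
by case: k hk.
Qed.

Lemma same_contra k r m1 m2 w x i j : ~~ odd r -> 3 <= k -> m1 < k.*2 -> m2 < k.*2 ->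
  i < Dn k r -> j < Dn k r ->
  (w + Tq k r m1) %% Dn k r = i %% Dn k r ->
  (w + Tq k r m2) %% Dn k r = j %% Dn k r ->
  (x + nth 0 (Sq k r) m1) %% Dn k r = (x + nth 0 (Sq k r) m2) %% Dn k r ->
  odd i = odd j -> i = j.
Proof.
move=> hr hk h1 h2 hi hj W1 W2 X hij.
have [a1 b1] := Sq_bounds k r _ hk h1; have [a2 b2] := Sq_bounds k r _ hk h2.
move/eqP: X; rewrite eqn_modDl !modn_small; try slia.
move/eqP; rewrite !nth_Sq' // => /gv_inj Hq.
have Hq' : m1./2 = m2./2.
  apply: Hq; first exact: ltnW.
    rewrite -(odd_double_half m1) in h1; case: (odd m1) h1 => /= h1; slia.
  rewrite -(odd_double_half m2) in h2; case: (odd m2) h2 => /= h2; slia.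
have hev := Dn_even k r hk.
have O1 := odd_cong _ _ _ hev W1; have O2 := odd_cong _ _ _ hev W2.
have hm : odd m1 = odd m2.
  rewrite -(Tq_odd k r m1 hr hk (ltnW h1)) -(Tq_odd k r m2 hr hk (ltnW h2)).
  move: O1 O2; rewrite !oddD hij => <-.
  by case: (odd w); case: (odd (Tq k r m1)); case: (odd (Tq k r m2)).
have E : m1 = m2 by rewrite -(odd_double_half m1) -(odd_double_half m2) hm Hq'.
move: W1 W2; rewrite E => -> ; rewrite !modn_small //.
Qed.

Lemma size_Dfaces k r : size (Dfaces k r) = Dn k r.
Proof. by rewrite /Dfaces size_map size_iota. Qed.

Lemma nth_Dfaces k r i : i < Dn k r -> nth [::] (Dfaces k r) i = Dface k r i.
Proof. by move=> hi; rewrite /Dfaces (nth_map 0) ?size_iota // nth_iota. Qed.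

Lemma conflict (s t : seq nat) (b : bool) x y :
  (x, y) \in dedges s -> (x, y) \in dedges t ->
  has (fun d => d \in dedges (oface t b)) (dedges (oface s b)).
Proof.
move=> Hs Ht; apply/hasP; case: b => /=; first by exists (x, y).
by exists (y, x); apply: dedges_rev.
Qed.

Lemma Dbase_end k r : 3 <= k ->
  nth 0 (Dbase k r) (k.*2 - 2) = 2 %% Dn k r /\ nth 0 (Dbase k r) (k.*2 - 1) = 1 %% Dn k r.
Proof.
move=> hk; rewrite /Dbase /= mul2n.
have -> : k.*2 - 2 = (k.*2 - 3).+1 by slia.
have -> : k.*2 - 1 = (k.*2 - 3).+2 by slia.
rewrite /= !nth_cat size_map size_iota ltnn subnn ltnNge leqnSn /= subSn // subnn //.
Qed.

Lemma Dbase_start k r : 3 <= k ->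
  nth 0 (Dbase k r) 1 = Dw k r 1 /\ nth 0 (Dbase k r) 2 = Dw k r 2.
Proof.
move=> hk; rewrite /Dbase /= mul2n !nth_cat size_map size_iota.
have h1 : 0 < k.*2 - 3 by slia.
have h2 : 1 < k.*2 - 3 by slia.
rewrite h1 h2 !(nth_map 0) ?size_iota // !nth_iota //.
Qed.

Lemma Dw12 k r : 3 <= k ->
  Dw k r 1 = Dn k r - av k r /\ Dw k r 2 = Dn k r - 2 * av k r.
Proof.
move=> hk; have H := Dn_big k r hk.
have ha : 0 < av k r by rewrite /av addn_gt0 expn_gt0.
rewrite /Dw /Dsteps /= take0 /= -/(av k r) !addn0.
rewrite !(modn_small (m := av k r)); try slia.
rewrite !modn_small; try slia.
Qed.

Theorem mainTheorem17 (k r : nat) (hk : 3 <= k) :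
  (~~ odd r -> D_orientable k r) /\ (odd r -> ~ D_orientable k r).
Proof.
split.
  move=> hr; exists (fun i => ~~ odd i) => i j hi hj hij.
  rewrite size_Dfaces in hi hj; rewrite !nth_Dfaces //.
  apply/negP => /hasP [[u v] H1 H2].
  have [m1 h1 E1] := oface_edge _ _ _ _ _ _ hk H1.
  have [m2 h2 E2] := oface_edge _ _ _ _ _ _ hk H2.
  move: E1 E2; case Oi: (odd i); case Oj: (odd j); move=> /= [A1 B1] [A2 B2].
  - have E := same_contra k r m1 m2 v u i j hr hk h1 h2 hi hj A1 A2 ltac:(by rewrite B1 B2) ltac:(by rewrite Oi Oj).
    by rewrite E eqxx in hij.
  - exact: (opp_contra k r m1 m2 u v hk h1 h2 B1 B2).
  - exact: (opp_contra k r m1 m2 v u hk h1 h2 B1 B2).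
  - have E := same_contra k r m1 m2 u v i j hr hk h1 h2 hi hj A1 A2 ltac:(by rewrite B1 B2) ltac:(by rewrite Oi Oj).
    by rewrite E eqxx in hij.
move=> hr [e He].
rewrite size_Dfaces in He.
set n := Dn k r.
have hn := Dn_big k r hk.
have [Be1 Be2] := Dbase_end k r hk.
have step : forall i, i.+1 < n -> e i.+1 = ~~ e i.
  move=> i hi.
  have M1 : ((2 + i) %% n, (1 + i) %% n) \in dedges (Dface k r i).
    apply/mem_dedges; rewrite size_Dface //.
    exists (k.*2 - 2); first by slia.
    have -> : (k.*2 - 2).+1 %% k.*2 = k.*2 - 1 by rewrite modn_small; slia.
    rewrite !nth_Dface //; try slia.
    by rewrite Be1 Be2 !modnDml.
  have M2 : ((2 + i) %% n, (1 + i) %% n) \in dedges (Dface k r i.+1).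
    apply/mem_dedges; rewrite size_Dface //.
    exists (k.*2 - 1); first by slia.
    have -> : (k.*2 - 1).+1 %% k.*2 = 0 by rewrite subn1 prednK ?modnn //; slia.
    rewrite !nth_Dface //; try slia.
    rewrite Be2 modnDml /=.
    by rewrite -/n add0n add1n -addn2 addnC add1n.
  have := He i i.+1 (ltnW hi) hi ltac:(by rewrite neq_ltn ltnSn).
  rewrite !nth_Dfaces //; last exact: ltnW.
  case: (e i.+1); case: (e i) => //= H; exfalso; move/negP: H; apply.
    exact: (conflict _ _ true _ _ M1 M2).
  exact: (conflict _ _ false _ _ M1 M2).
have epar : forall m, m < n -> e m = odd m (+) e 0.
  elim=> [//|m IH] hm.
  by rewrite step // IH ?(ltnW hm) //= negb_add.
set a := av k r.
have ha : 0 < a by rewrite /a /av addn_gt0 expn_gt0.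
have han : a < n by rewrite /n; slia.
have aev : odd a = false.
  by rewrite /a /av oddD oddX hr /= orbT.
have [Bs1 Bs2] := Dbase_start k r hk.
have [W1 W2] := Dw12 k r hk.
have M1 : (0, (n - a) %% n) \in dedges (Dface k r 0).
  apply/mem_dedges; rewrite size_Dface //.
  exists 0; first by slia.
  rewrite (modn_small (m := 1)); last by slia.
  rewrite !nth_Dface //; try slia.
  by rewrite Bs1 W1 /= mod0n addn0.
have M2 : (0, (n - a) %% n) \in dedges (Dface k r a).
  apply/mem_dedges; rewrite size_Dface //.
  exists 1; first by slia.
  rewrite (modn_small (m := 2)); last by slia.
  rewrite !nth_Dface //; try slia.
  rewrite Bs1 Bs2 W1 W2 -/n -/a subnK ?modnn; last by slia.
  split => //; congr (_ %% n); slia.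
have := He 0 a ltac:(slia) han ltac:(by rewrite eq_sym -lt0n).
rewrite !nth_Dfaces //; last by slia.
rewrite (epar a han) aev /=.
move/negP; apply; exact: (conflict _ _ _ _ _ M1 M2).
Qed.
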